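(* Let $X$ be a real Hilbert space, $A,B\colon X\rightrightarrows X$ maximally monotone, $T:=\operatorname{Id}-J_A+J_BR_A$, $v:=P_{\overline{\operatorname{ran}}(\operatorname{Id}-T)}(0)$, $D:=\operatorname{dom}A-\operatorname{dom}B$, $R:=\operatorname{ran}A+\operatorname{ran}B$, $v_D:=P_{\overline D}(0)$, $v_R:=P_{\overline R}(0)$, and assume $\overline{\operatorname{ran}}(\operatorname{Id}-T)=\overline{D\cap R}=\overline D\cap\overline R$. Suppose $v_R=0$, that $f\in X$ satisfies $f=v+Tf$, and let $x\in X$. Then (i) for all $n\in\mathbb N$, $J_AT^nf=J_A(f-nv_D)=J_Af$; (ii) $(J_AT^nx)_{n\in\mathbb N}$ is bounded; (iii) $(J_BR_AT^nx)_{n\in\mathbb N}$ is bounded.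
   Context: $J_C:=(\operatorname{Id}+C)^{-1}$, $R_C:=2J_C-\operatorname{Id}$ for maximally monotone $C$; $P_S$ is the projection onto a nonempty closed convex set $S$. *)

(* Defs.v *)
From HB Require Import structures.
From mathcomp Require Import all_boot all_order all_algebra.
From mathcomp Require Import all_classical all_reals all_analysis.
Set Implicit Arguments. Unset Strict Implicit. Unset Printing Implicit Defensive.
Import Order.TTheory GRing.Theory Num.Theory.
Import numFieldNormedType.Exports.
Local Open Scope classical_set_scope.
Local Open Scope ring_scope.

(* A real Hilbert space is a complete normed space X over R whose norm comes
   from an inner product ip: ip symmetric, linear in the first argument, and
   ||x||^2 = <x,x>. *)
Definition is_inner_product {R : realType} {X : normedModType R}
  (ip : X -> X -> R) : Prop :=
  [/\ forall x y, ip x y = ip y x,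
      forall (a : R) (x y z : X), ip (a *: x + y) z = a * ip x z + ip y z &
      forall x, `|x| ^+ 2 = ip x x].

Section Operators.
Context {R : realType} {X : normedModType R}.

(* Set-valued operators X ⇉ X are relations: (A x) is the set of images of x. *)
Definition monotone_op (ip : X -> X -> R) (A : X -> set X) : Prop :=
  forall x u y w, A x u -> A y w -> 0 <= ip (x - y) (u - w).

Definition maximally_monotone (ip : X -> X -> R) (A : X -> set X) : Prop :=
  monotone_op ip A /\
  forall x u, (forall y w, A y w -> 0 <= ip (x - y) (u - w)) -> A x u.

Definition dom_op (A : X -> set X) : set X := [set x | exists u, A x u].
Definition ran_op (A : X -> set X) : set X := [set u | exists x, A x u].

Definition set_add (S1 S2 : set X) : set X :=
  [set z | exists a b, S1 a /\ S2 b /\ z = a + b].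
Definition set_sub (S1 S2 : set X) : set X :=
  [set z | exists a b, S1 a /\ S2 b /\ z = a - b].

(* Resolvent J_A := (Id + A)^{-1}: J_A x is the point p with x ∈ p + A p
   (unique and existing for maximally monotone A by Minty). *)
Definition resolvent (A : X -> set X) (x : X) : X :=
  get [set p | A p (x - p)].

Definition reflected_resolvent (A : X -> set X) (x : X) : X :=
  2%:R *: resolvent A x - x.

Definition nearest_proj (S : set X) (x : X) : X :=
  get [set p | S p /\ forall y, S y -> `|x - p| <= `|x - y|].

Definition DR_op (A B : X -> set X) (x : X) : X :=
  x - resolvent A x + resolvent B (reflected_resolvent A x).

End Operators.

(* Main.v *)
Require Import Defs.
From HB Require Import structures.
From mathcomp Require Import all_boot all_order all_algebra.
From mathcomp Require Import all_classical all_reals all_analysis.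
From mathcomp Require Import lra ring.
Import Order.TTheory GRing.Theory Num.Theory.
Import numFieldNormedType.Exports.
Local Open Scope classical_set_scope.
Local Open Scope ring_scope.

Set Implicit Arguments. Unset Strict Implicit.
Section Aux.
Variables (R : realType) (X : completeNormedModType R).

Lemma closure_normP (S : set X) x :
  closure S x <-> forall e : R, 0 < e -> exists s, S s /\ `|x - s| < e.
Proof.
split.
- move=> cl e e0. have := cl (ball x e).
  case. by apply: nbhsx_ballx.
  move=> s [Ss bs]; exists s; split => //. by rewrite -ball_normE /ball_ in bs.
- move=> H B /nbhs_ballP [e /= e0 sub].
  have [s [Ss xs]] := H e e0. exists s; split => //. apply: sub. by rewrite -ball_normE.
Qed.

Lemma cauchy_seq_cvg (u : nat -> X) :
  (forall e : R, 0 < e -> exists N, forall k j, (N <= k)%N -> (N <= j)%N -> `|u k - u j| < e) ->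
  exists l, forall e : R, 0 < e -> exists N, forall n, (N <= n)%N -> `|l - u n| < e.
Proof.
move=> H.
have : cvg (u @ \oo).
  apply: cauchy_cvg. apply: cauchy_exP => e e0.
  have [N HN] := H e e0. exists (u N). exists N => // n /= Nn.
  rewrite -ball_normE /ball_ /=. by apply: HN.
move=> /cvgrPdist_lt Hl. exists (lim (u @ \oo)) => e e0.
have [N _ HN] := Hl e e0. by exists N => n Nn; apply: HN.
Qed.

Lemma closure_sub (S : set X) : S `<=` closure S.
Proof. exact: subset_closure. Qed.

Lemma closure_closure (S : set X) x : closure (closure S) x -> closure S x.
Proof. by have := closed_closure (A:=S); rewrite closure_id => <-. Qed.

Lemma inf_approx (E : set R) e : E !=set0 -> lbound E 0 -> 0 < e ->
  exists r, E r /\ r < inf E + e.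
Proof.
move=> ne lb e0. have hi : has_inf E by split => //; exists 0.
by have [r Er H] := inf_adherent e0 hi; exists r.
Qed.

Lemma inf_le (E : set R) r : lbound E 0 -> E r -> inf E <= r.
Proof. by move=> lb Er; apply: ge_inf => //; exists 0. Qed.

Lemma inf_ge0 (E : set R) : E !=set0 -> lbound E 0 -> 0 <= inf E.
Proof. by move=> ne lb; apply: lb_le_inf. Qed.

Variable ip : X -> X -> R.
Hypothesis Hip : is_inner_product ip.

Lemma ipC x y : ip x y = ip y x. Proof. by case: Hip. Qed.
Lemma ipxx x : ip x x = `|x| ^+ 2. Proof. by case: Hip. Qed.
Lemma ip_lin a x y z : ip (a *: x + y) z = a * ip x z + ip y z. Proof. by case: Hip. Qed.
Lemma ip0l z : ip 0 z = 0.
Proof. have := ip_lin 1 0 0 z. rewrite scaler0 addr0 mul1r => H. lra. Qed.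
Lemma ipDl x y z : ip (x + y) z = ip x z + ip y z.
Proof. by rewrite -[x in LHS]scale1r ip_lin mul1r. Qed.
Lemma ipZl a x z : ip (a *: x) z = a * ip x z.
Proof. by rewrite -[_ *: _]addr0 ip_lin ip0l addr0. Qed.
Lemma ipNl x z : ip (- x) z = - ip x z.
Proof. by rewrite -scaleN1r ipZl mulN1r. Qed.
Lemma ipBl x y z : ip (x - y) z = ip x z - ip y z.
Proof. by rewrite ipDl ipNl. Qed.
Lemma ip0r z : ip z 0 = 0. Proof. by rewrite ipC ip0l. Qed.
Lemma ipDr x y z : ip z (x + y) = ip z x + ip z y.
Proof. by rewrite ipC ipDl !(ipC z). Qed.
Lemma ipZr a x z : ip z (a *: x) = a * ip z x.
Proof. by rewrite ipC ipZl ipC. Qed.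
Lemma ipNr x z : ip z (- x) = - ip z x.
Proof. by rewrite ipC ipNl ipC. Qed.
Lemma ipBr x y z : ip z (x - y) = ip z x - ip z y.
Proof. by rewrite ipDr ipNr. Qed.

Definition ipE := (ipDl, ipDr, ipBl, ipBr, ipNl, ipNr, ipZl, ipZr, ip0l, ip0r).

Lemma sq_norm x : `|x| ^+ 2 = ip x x. Proof. by rewrite ipxx. Qed.

Lemma ip_le_half x y : 2 * ip x y <= `|x| ^+ 2 + `|y| ^+ 2.
Proof.
have := ipxx (x - y). rewrite !ipE !ipxx (ipC y x) => H.
have : 0 <= `|x - y| ^+ 2 by apply: sqr_ge0. lra.
Qed.

Lemma CS x y : ip x y <= `|x| * `|y|.
Proof.
have [x0|xn0] := eqVneq `|x| 0.
  by move/normr0_eq0: x0 => ->; rewrite ip0l normr0 mul0r.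
have [y0|yn0] := eqVneq `|y| 0.
  by move/normr0_eq0: y0 => ->; rewrite ip0r normr0 mulr0.
have := ip_le_half (`|y| *: x) (`|x| *: y).
rewrite !ipE !normrZ !normr_id => H.
have p : 0 < `|x| * `|y| by rewrite mulr_gt0 // lt_def ?xn0 ?yn0 ?normr_ge0.
have H2 : `|x| * `|y| * (2 * ip x y) <= `|x| * `|y| * (2 * (`|x| * `|y|)).
  move: H; rewrite !exprMn. move=> H. nra.
rewrite ler_pM2l // in H2. lra.
Qed.

Lemma CSabs x y : `|ip x y| <= `|x| * `|y|.
Proof.
rewrite ler_norml CS andbT. have := CS (- x) y. rewrite ipNl normrN. lra.
Qed.

Lemma le_norm_sq (a b : X) : `|a| ^+ 2 <= `|b| ^+ 2 -> `|a| <= `|b|.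
Proof. by rewrite ler_pXn2r // nnegrE. Qed.


Lemma le_eps (a b : R) : (forall e : R, 0 < e -> a <= b + e) -> a <= b.
Proof.
move=> H. rewrite leNgt; apply/negP => ab.
have := H ((a - b) / 2). have -> : 0 < (a - b) / 2 by rewrite divr_gt0 // subr_gt0.
move=> /(_ isT). lra.
Qed.

Definition epsn (k : nat) : R := k.+1%:R^-1.
Lemma epsn_gt0 k : 0 < epsn k.
Proof. by rewrite /epsn invr_gt0 ltr0Sn. Qed.

Lemma archi_inv (e : R) : 0 < e -> exists N : nat, forall k, (N <= k)%N -> epsn k < e.
Proof.
move=> e0. have [N _ HN] := near_infty_natSinv_lt (PosNum e0).
by exists N => k Nk; apply: HN.
Qed.

Lemma small_t (al be : R) : 0 <= be ->
  (forall t, 0 < t -> t <= 1 -> 0 <= t * al + t ^+ 2 * be) -> 0 <= al.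
Proof.
move=> b0 H. rewrite leNgt; apply/negP => a0.
have d0 : 0 < be - al by lra.
set t := - al / (be - al).
have t0 : 0 < t by rewrite /t divr_gt0 // oppr_gt0.
have t1 : t <= 1 by rewrite /t ler_pdivrMr // mul1r; lra.
have := H t t0 t1.
have -> : t * al + t ^+ 2 * be = t * (- al ^+ 2 / (be - al)).
  rewrite /t; field; lra.
have a2 : 0 < al ^+ 2 by rewrite exprn_even_gt0 //= lt_eqF.
have : 0 < t * (al ^+ 2 / (be - al)) by rewrite mulr_gt0 // divr_gt0.
rewrite mulNr mulrN. lra.
Qed.

Lemma norm_comb (a d : X) (t : R) :
  `|a + t *: d| ^+ 2 = `|a| ^+ 2 + 2 * t * ip a d + t ^+ 2 * `|d| ^+ 2.
Proof. rewrite !sq_norm !ipE (ipC d a). lra. Qed.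

Lemma norm_mid (a b : X) :
  `|a + 2^-1 *: (b - a)| ^+ 2 = (`|a| ^+ 2 + `|b| ^+ 2) / 2 - `|a - b| ^+ 2 / 4.
Proof. rewrite !sq_norm !ipE (ipC b a). lra. Qed.

Lemma norm_add2 (a b : X) : `|a + b| ^+ 2 = `|a| ^+ 2 + 2 * ip a b + `|b| ^+ 2.
Proof. rewrite !sq_norm !ipE (ipC b a). lra. Qed.

Section Mono.
Variable A : X -> set X.
Hypothesis HA : maximally_monotone ip A.

Lemma mono x u y w : A x u -> A y w -> 0 <= ip (x - y) (u - w).
Proof. by case: HA => m _; apply: m. Qed.

Lemma maxi x u : (forall y w, A y w -> 0 <= ip (x - y) (u - w)) -> A x u.
Proof. by case: HA => _; apply. Qed.

Lemma gra_ne : exists y w, A y w.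
Proof.
apply/not_existsP => H. have : A 0 0.
  apply: maxi => y w Ayw. exfalso. apply: (H y). by exists w.
move=> A00. apply: (H 0). by exists 0.
Qed.

Definition phi x u (c : R) := forall y w, A y w -> ip x w + ip y u - ip y w <= c.

Lemma phi_fact x u (c : R) : phi x u c -> ip x u <= c.
Proof.
move=> H. rewrite leNgt; apply/negP => cx.
have Axu : A x u.
  apply: maxi => y w Ayw. have := H y w Ayw. rewrite !ipE. lra.
have := H x u Axu. lra.
Qed.

Lemma phi_gra y w : A y w -> phi y w (ip y w).
Proof. move=> Ayw y' w' Ayw'. have := mono Ayw Ayw'. rewrite !ipE. lra. Qed.

Lemma phi_conv x u (c : R) x' u' (c' t : R) : phi x u c -> phi x' u' c' -> 0 <= t <= 1 ->
  phi (x + t *: (x' - x)) (u + t *: (u' - u)) (c + t * (c' - c)).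
Proof.
move=> H H' /andP[t0 t1] y w Ayw. have h := H y w Ayw. have h' := H' y w Ayw.
rewrite !ipE. nra.
Qed.

Definition Mset := [set r | exists x u (c : R), phi x u c /\ r = c + (`|x| ^+ 2 + `|u| ^+ 2) / 2].

Lemma Mset_lb : lbound Mset 0.
Proof.
move=> r [x [u [c [H ->]]]]. have := phi_fact H. have := norm_add2 x u.
have : 0 <= `|x + u| ^+ 2 by apply: sqr_ge0. lra.
Qed.

Lemma Mset_ne : Mset !=set0.
Proof.
have [y [w Ayw]] := gra_ne. exists (ip y w + (`|y| ^+ 2 + `|w| ^+ 2) / 2).
by exists y, w, (ip y w); split => //; apply: phi_gra.
Qed.

Lemma minty0 : exists p, A p (- p).
Proof.
set m := inf Mset.
have hk : forall k : nat, exists t : X * X * R,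
    phi t.1.1 t.1.2 t.2 /\ t.2 + (`|t.1.1| ^+ 2 + `|t.1.2| ^+ 2) / 2 < m + epsn k.
  move=> k. have ek := epsn_gt0 k.
  have [r [[x [u [c [H Er]]]] Hr]] := inf_approx Mset_ne Mset_lb ek.
  rewrite Er in Hr.
  by exists (x, u, c).
have [s Hs] := choice hk.
pose xs k := (s k).1.1. pose us k := (s k).1.2. pose cs k := (s k).2.
have Hphi k : phi (xs k) (us k) (cs k) by case: (Hs k).
have Hh k : cs k + (`|xs k| ^+ 2 + `|us k| ^+ 2) / 2 < m + epsn k by case: (Hs k).
have Hge x u (c : R) : phi x u c -> m <= c + (`|x| ^+ 2 + `|u| ^+ 2) / 2.
  move=> H. apply: inf_le; first exact: Mset_lb. by exists x, u, c.
have est k j : `|xs k - xs j| ^+ 2 + `|us k - us j| ^+ 2 <= 4 * (epsn k + epsn j).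
  have h2 : 0 <= (2^-1 : R) <= 1 by apply/andP; split; lra.
  have := Hge _ _ _ (phi_conv (Hphi k) (Hphi j) h2).
  rewrite !norm_mid. have := Hh k. have := Hh j. lra.
have cauchy (z : nat -> X) : (forall k j, `|z k - z j| ^+ 2 <= 4 * (epsn k + epsn j)) ->
    exists l, forall e : R, 0 < e -> exists N, forall n, (N <= n)%N -> `|l - z n| < e.
  move=> Hz. apply: cauchy_seq_cvg => e e0.
  have e20 : 0 < e ^+ 2 / 8 by rewrite divr_gt0 // exprn_gt0.
  have [N HN] := archi_inv e20. exists N => k j Nk Nj.
  have := HN k Nk. have := HN j Nj. have := Hz k j. move=> h1 h2 h3.
  rewrite -(ltr_pXn2r (n:=2)) // ?nnegrE //; last exact: ltW. lra.
have [xb Hxb] : exists l, forall e : R, 0 < e -> exists N, forall n, (N <= n)%N -> `|l - xs n| < e.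
  apply: cauchy => k j. have := est k j. have : 0 <= `|us k - us j| ^+ 2 by apply: sqr_ge0. lra.
have [ub Hub] : exists l, forall e : R, 0 < e -> exists N, forall n, (N <= n)%N -> `|l - us n| < e.
  apply: cauchy => k j. have := est k j. have : 0 <= `|xs k - xs j| ^+ 2 by apply: sqr_ge0. lra.
set cb := m - (`|xb| ^+ 2 + `|ub| ^+ 2) / 2.
have phib : phi xb ub cb.
  move=> y w Ayw. apply: le_eps => e e0.
  set C := `|xb| + `|ub| + 1 + `|w| + `|y|.
  have hxb := normr_ge0 xb. have hub := normr_ge0 ub. have hw := normr_ge0 w. have hy := normr_ge0 y.
  have C0 : 0 < C by rewrite /C; lra.
  set dl := Num.min 1 (e / (2 * C)).
  have d0 : 0 < dl by rewrite lt_min ltr01 /= divr_gt0 // mulr_gt0.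
  have dle : dl <= e / (2 * C) by rewrite /dl ge_min lexx orbT.
  have Cd : C * dl <= e / 2.
    have := ler_wpM2l (ltW C0) dle. have -> : C * (e / (2 * C)) = e / 2 by field; lra. by [].
  have [N1 H1] := Hxb _ d0. have [N2 H2] := Hub _ d0.
  have e2 : 0 < e / 2 by rewrite divr_gt0.
  have [N3 H3] := archi_inv e2.
  set k := maxn N1 (maxn N2 N3).
  have /H1 hx : (N1 <= k)%N by rewrite leq_maxl.
  have /H2 hu : (N2 <= k)%N by rewrite /k (leq_trans _ (leq_maxr _ _)) // leq_maxl.
  have /H3 hk3 : (N3 <= k)%N by rewrite /k (leq_trans _ (leq_maxr _ _)) // leq_maxr.
  have hl := Hphi k y w Ayw. have hh := Hh k.
  have ex : xs k = xb - (xb - xs k) by rewrite opprB addrC subrK.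
  have eu : us k = ub - (ub - us k) by rewrite opprB addrC subrK.
  move: (xb - xs k) hx ex => dx hx ex.
  move: (ub - us k) hu eu => du hu eu.
  rewrite ex eu !ipE in hl. rewrite ex eu in hh.
  have nx := norm_add2 xb (- dx). have nu := norm_add2 ub (- du).
  rewrite !ipE !normrN in nx nu.
  have c1 := CS xb dx. have c2 := CS ub du. have c3 := CS dx w. have c4 := CS y du.
  have b1 : `|xb| * `|dx| <= `|xb| * dl by apply: ler_wpM2l => //; apply: ltW.
  have b2 : `|ub| * `|du| <= `|ub| * dl by apply: ler_wpM2l => //; apply: ltW.
  have b3 : `|dx| * `|w| <= dl * `|w| by apply: ler_wpM2r => //; apply: ltW.
  have b4 : `|y| * `|du| <= `|y| * dl by apply: ler_wpM2l => //; apply: ltW.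
  have s1 := sqr_ge0 `|dx|. have s2 := sqr_ge0 `|du|.
  have hd := ltW d0.
  move: Cd; rewrite /C => Cd.
  rewrite /cb. nra.
have mcb : m = cb + (`|xb| ^+ 2 + `|ub| ^+ 2) / 2 by rewrite /cb; lra.
have key : forall y w, A y w -> `|xb + ub| ^+ 2 <= ip (y + ub) (w + xb).
  move=> y w Ayw.
  have al0 : 0 <= ip y w - cb + ip xb (y - xb) + ip ub (w - ub).
    apply: (small_t (be := (`|y - xb| ^+ 2 + `|w - ub| ^+ 2) / 2)).
      have := sqr_ge0 `|y - xb|. have := sqr_ge0 `|w - ub|. lra.
    move=> t t0 t1. have h01 : 0 <= t <= 1 by rewrite ltW.
    have := Hge _ _ _ (phi_conv phib (phi_gra Ayw) h01).
    rewrite !norm_comb mcb. lra.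
  have f1 := phi_fact phib. have n2 := norm_add2 xb ub.
  move: al0; rewrite !ipE !sq_norm in n2 *. rewrite !ipxx in n2 *.
  rewrite (ipC y xb) (ipC ub xb) in n2 *. lra.
have Amax : A (- ub) (- xb).
  apply: maxi => y w Ayw. have := key y w Ayw.
  rewrite -!opprD ipNl ipNr opprK (addrC ub y) (addrC xb w).
  have := sqr_ge0 `|xb + ub|. lra.
have := key _ _ Amax. rewrite !addNr ip0l => H.
have : `|xb + ub| = 0.
  apply/eqP; rewrite -sqrf_eq0 eq_le H andTb. exact: sqr_ge0.
move/normr0_eq0 => e0.
have hx : - xb = ub.
  by apply/eqP; rewrite eq_sym -subr_eq0 opprK addrC e0.
exists (- ub). rewrite opprK. by move: Amax; rewrite hx.
Qed.
End Mono.

Section Mono2.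
Variable A : X -> set X.
Hypothesis HA : maximally_monotone ip A.

Lemma minty_gen (mu : R) (c z : X) : 0 < mu -> exists p, A p (c + mu *: (z - p)).
Proof.
move=> m0.
pose A2 := fun x w => A x (c + mu *: (w + z)).
have HA2 : maximally_monotone ip A2.
  split.
  - move=> x u y w h1 h2. have := mono HA h1 h2.
    have -> : c + mu *: (u + z) - (c + mu *: (w + z)) = mu *: (u - w).
      by rewrite opprD addrACA subrr add0r -scalerBr opprD addrACA subrr addr0.
    by rewrite ipZr pmulr_rge0.
  - move=> x u H. apply: (maxi HA) => y w Ayw.
    have h2 : A2 y (mu^-1 *: (w - c) - z).
      by rewrite /A2 subrK scalerA mulfV ?gt_eqF // scale1r addrC subrK.
    have := H _ _ h2. move: (x - y) => d.
    rewrite !ipE => h. have := mulr_ge0 (ltW m0) h.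
    rewrite mulrBr mulrBr mulrA mulfV ?gt_eqF // mul1r. lra.
have [p Hp] := minty0 HA2. exists p. by move: Hp; rewrite /A2 /= (addrC (- p) z).
Qed.

Lemma res_ex x : exists p, A p (x - p).
Proof. have [p Hp] := minty_gen 0 x ltr01. exists p. by move: Hp; rewrite add0r scale1r. Qed.

Lemma res_uniq x p q : A p (x - p) -> A q (x - q) -> p = q.
Proof.
move=> hp hq. have := mono HA hp hq.
have -> : x - p - (x - q) = q - p by rewrite opprB addrC addrA subrK.
rewrite -[q - p]opprB ipNr ipxx oppr_ge0 => h.
apply/eqP; rewrite -subr_eq0 -normr_eq0 -sqrf_eq0 eq_le h andTb. exact: sqr_ge0.
Qed.

Lemma res_spec x : A (resolvent A x) (x - resolvent A x).
Proof. by apply: (getPex (P := [set p | A p (x - p)])); apply: res_ex. Qed.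

Lemma resolventE x p : A p (x - p) -> resolvent A x = p.
Proof. by move=> hp; apply: res_uniq (res_spec x) hp. Qed.

Lemma res_firm x y :
  `|resolvent A x - resolvent A y| ^+ 2 <= ip (resolvent A x - resolvent A y) (x - y).
Proof.
have := mono HA (res_spec x) (res_spec y).
move: (resolvent A x) (resolvent A y) => p q. rewrite !ipE !sq_norm !ipE. lra.
Qed.

Lemma res_nonexp x y : `|resolvent A x - resolvent A y| <= `|x - y|.
Proof.
apply: le_norm_sq. have := res_firm x y. have := ip_le_half (resolvent A x - resolvent A y) (x - y).
lra.
Qed.

End Mono2.

Lemma sq_small (lam a W K d : R) : 0 < lam -> 0 <= a -> 0 <= W -> 0 < d -> d <= 1 ->
  lam * a ^+ 2 <= a * W + K -> W + `|K| + 1 <= lam * d -> a ^+ 2 < d.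
Proof.
move=> l0 a0 W0 d0 d1 h1 h2. have hK := ler_norm K. have hK0 := normr_ge0 K.
have [a1|a1] := leP 1 a.
- exfalso.
  have h3 : lam * a ^+ 2 <= a * (W + `|K|) by nra.
  have h4 : lam * a <= W + `|K|.
    rewrite expr2 mulrA (mulrC lam) -mulrA in h3. rewrite -(ler_pM2l (x:=a)) //; lra.
  have : lam <= lam * a by rewrite ler_peMr // ltW.
  have : lam * d <= lam by rewrite ler_piMr // ltW.
  lra.
- have h3 : lam * a ^+ 2 <= W + `|K| by nra.
  have : lam * a ^+ 2 < lam * d by lra.
  by rewrite ltr_pM2l.
Qed.

Lemma closure_ltP (S : set X) x :
  (forall e : R, 0 < e -> exists s, S s /\ `|x - s| < e) -> closure S x.
Proof. by move=> H; apply/closure_normP. Qed.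

Lemma comb_eq (y1 y2 : X) (t : R) : (1 - t) *: y1 + t *: y2 = y1 + t *: (y2 - y1).
Proof. by rewrite scalerBl scale1r scalerBr addrAC addrA. Qed.

Section Mono3.
Variable A : X -> set X.
Hypothesis HA : maximally_monotone ip A.

Lemma dom_nc y1 y2 (t : R) : dom_op A y1 -> dom_op A y2 -> 0 <= t <= 1 ->
  closure (dom_op A) ((1 - t) *: y1 + t *: y2).
Proof.
move=> [w1 A1] [w2 A2] /andP[t0 t1]. rewrite comb_eq.
have [D ED] : exists D, D = y2 - y1 by eexists. rewrite -ED.
have Ey2 : y2 = y1 + D by rewrite ED addrC subrK.
apply: closure_ltP => eps e0.
set c := y1 + t *: D.
set W := (1 - t) *: w1 + t *: w2.
set K := t * (1 - t) * (ip D w2 - ip D w1).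
have [d [eps0 d1 d2]] : exists d : R, [/\ 0 < d, d <= 1 & d <= eps ^+ 2].
  exists (Num.min 1 (eps ^+ 2)); split; first by rewrite lt_min ltr01 exprn_gt0.
  - by rewrite ge_min lexx.
  - by rewrite ge_min lexx orbT.
set M := `|W| + `|K| + 1.
have M0 : 0 < M by rewrite /M; have := normr_ge0 W; have := normr_ge0 K; lra.
have [N HN] := archi_inv (divr_gt0 eps0 M0).
have hN := HN N (leqnn N).
set lam : R := N.+1%:R.
have l0 : 0 < lam by rewrite /lam ltr0Sn.
have hlam : M <= lam * d.
  move: hN; rewrite /epsn -/lam ltr_pdivlMr // ltr_pdivrMl //. exact: ltW.
have [p Hp] := minty_gen HA 0 c l0. rewrite add0r in Hp.
exists p; split; first by exists (lam *: (c - p)).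
have h1 := mono HA Hp A1. have h2 := mono HA Hp A2.
have [e Ee] : exists e, e = c - p by eexists.
have Ep : p = c - e by rewrite Ee opprB addrC subrK.
rewrite Ep /c Ey2 in h1 h2.
rewrite !ipE in h1 h2.
have hc := CS e W. rewrite /W !ipE in hc.
have key : lam * `|e| ^+ 2 <= `|e| * `|W| + K.
  have t1p : 0 <= 1 - t by rewrite subr_ge0.
  rewrite sq_norm /K. have := mulr_ge0 t1p h1. have := mulr_ge0 t0 h2.
  move: hc. rewrite (ipC D e). nra.
have := sq_small l0 (normr_ge0 e) (normr_ge0 W) eps0 d1 key hlam.
move=> h. rewrite -Ee -(ltr_pXn2r (n := 2)) ?nnegrE ?normr_ge0 //; last exact: ltW. lra.
Qed.

Lemma bar_cone z0 s0 k (sig : R) : A z0 s0 -> (forall y, dom_op A y -> ip y k <= sig) ->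
  closure (ran_op A) (s0 + k).
Proof.
move=> Az Hb. apply: closure_ltP => eps e0.
set K0 := `|sig - ip z0 k| + 1.
have K00 : 0 < K0 by rewrite /K0; have := normr_ge0 (sig - ip z0 k); lra.
have [N HN] := archi_inv (divr_gt0 (exprn_gt0 2 e0) K00).
have hN := HN N (leqnn N). have n0 := epsn_gt0 N.
move: (epsn N) n0 hN => nu n0 hN.
have [p Hp] := minty_gen HA (s0 + k) z0 n0.
exists (s0 + k + nu *: (z0 - p)); split; first by exists p.
rewrite opprD addrA subrr add0r normrN normrZ gtr0_norm //.
have hm := mono HA Hp Az.
have hs := Hb p (ex_intro _ _ Hp).
move: hm. rewrite addrAC (addrC s0) addrK.
have [d Ed] : exists d, d = z0 - p by eexists. rewrite -Ed.
have -> : p - z0 = - d by rewrite Ed opprB.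
rewrite ipNl !ipE -sq_norm => hm.
have Ep : p = z0 - d by rewrite Ed opprB addrC subrK.
rewrite Ep ipBl in hs.
have hK := ler_norm (sig - ip z0 k).
have h3 : nu * `|d| ^+ 2 <= sig - ip z0 k by lra.
have h4 : (nu * `|d|) ^+ 2 <= nu * K0.
  rewrite exprMn expr2 -mulrA. apply: ler_wpM2l; first exact: ltW. rewrite /K0. lra.
rewrite -(ltr_pXn2r (n := 2)) ?nnegrE ?mulr_ge0 ?normr_ge0 ?ltW //.
move: hN; rewrite ltr_pdivlMr // => hN. lra.
Qed.

End Mono3.

Definition inv_op (A : X -> set X) : X -> set X := fun x u => A u x.

Lemma inv_mm A : maximally_monotone ip A -> maximally_monotone ip (inv_op A).
Proof.
move=> HA; split.
- move=> x u y w; rewrite /inv_op => h1 h2. rewrite ipC. exact: (@mono A HA u x w y h1 h2).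
- move=> x u H. rewrite /inv_op. apply: (maxi HA) => y w Ayw. rewrite ipC. exact: H.
Qed.

Lemma dom_inv A : dom_op (inv_op A) = ran_op A.
Proof. by []. Qed.

Definition NC (S : set X) := forall a b (t : R), S a -> S b -> 0 <= t <= 1 ->
  closure S ((1 - t) *: a + t *: b).

Lemma comb_sub (a b a' b' : X) (t : R) :
  (1 - t) *: a + t *: b - ((1 - t) *: a' + t *: b') = (1 - t) *: (a - a') + t *: (b - b').
Proof. by rewrite opprD addrACA -!scalerBr. Qed.

Lemma norm_comb_le (a b : X) (t : R) : 0 <= t <= 1 ->
  `|(1 - t) *: a + t *: b| <= (1 - t) * `|a| + t * `|b|.
Proof.
move=> /andP[t0 t1]. apply: (le_trans (ler_normD _ _)).
by rewrite !normrZ !ger0_norm // subr_ge0.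
Qed.

Lemma NC_cl (S : set X) : NC S -> forall a b (t : R), closure S a -> closure S b -> 0 <= t <= 1 ->
  closure S ((1 - t) *: a + t *: b).
Proof.
move=> H a b t ca cb t01. apply: closure_ltP => e e0.
have e3 : 0 < e / 3 by rewrite divr_gt0.
have [a' [Sa' ha]] := (closure_normP S a).1 ca _ e3.
have [b' [Sb' hb]] := (closure_normP S b).1 cb _ e3.
have [s [Ss hs]] := (closure_normP S _).1 (H a' b' t Sa' Sb' t01) _ e3.
exists s; split => //.
have -> : (1 - t) *: a + t *: b - s =
  ((1 - t) *: a + t *: b - ((1 - t) *: a' + t *: b')) + ((1 - t) *: a' + t *: b' - s).
  by rewrite addrA subrK.
apply: (le_lt_trans (ler_normD _ _)). rewrite comb_sub.
have := norm_comb_le (a - a') (b - b') t01. move: t01 => /andP[t0 t1].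
have h1 : (1 - t) * `|a - a'| <= (1 - t) * (e / 3) by apply: ler_wpM2l; [rewrite subr_ge0|apply: ltW].
have h2 : t * `|b - b'| <= t * (e / 3) by apply: ler_wpM2l => //; apply: ltW.
lra.
Qed.

Lemma cl_sub (S1 S2 : set X) (c1 c2 : X) : closure S1 c1 -> closure S2 c2 -> closure (set_sub S1 S2) (c1 - c2).
Proof.
move=> h1 h2. apply: closure_ltP => e e0.
have e2 : 0 < e / 2 by rewrite divr_gt0.
have [s1 [S1s hs1]] := (closure_normP S1 _).1 h1 _ e2.
have [s2 [S2s hs2]] := (closure_normP S2 _).1 h2 _ e2.
exists (s1 - s2); split; first by exists s1, s2.
have -> : c1 - c2 - (s1 - s2) = (c1 - s1) - (c2 - s2).
  by rewrite (opprB s1 s2) (opprB c2 s2) addrACA [RHS]addrACA (addrC (- c2)).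
apply: (le_lt_trans (ler_normB _ _)). lra.
Qed.

Lemma cl_add (S1 S2 : set X) (c1 c2 : X) : closure S1 c1 -> closure S2 c2 -> closure (set_add S1 S2) (c1 + c2).
Proof.
move=> h1 h2. apply: closure_ltP => e e0.
have e2 : 0 < e / 2 by rewrite divr_gt0.
have [s1 [S1s hs1]] := (closure_normP S1 _).1 h1 _ e2.
have [s2 [S2s hs2]] := (closure_normP S2 _).1 h2 _ e2.
exists (s1 + s2); split; first by exists s1, s2.
have -> : c1 + c2 - (s1 + s2) = (c1 - s1) + (c2 - s2) by rewrite opprD addrACA.
apply: (le_lt_trans (ler_normD _ _)). lra.
Qed.

Lemma NC_sub (S1 S2 : set X) : NC S1 -> NC S2 -> NC (set_sub S1 S2).
Proof.
move=> H1 H2 a b t [a1 [a2 [h1 [h2 ->]]]] [b1 [b2 [k1 [k2 ->]]]] t01.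
have -> : (1 - t) *: (a1 - a2) + t *: (b1 - b2) =
   ((1 - t) *: a1 + t *: b1) - ((1 - t) *: a2 + t *: b2).
  by rewrite comb_sub.
exact: cl_sub (H1 _ _ _ h1 k1 t01) (H2 _ _ _ h2 k2 t01).
Qed.

Lemma NC_add (S1 S2 : set X) : NC S1 -> NC S2 -> NC (set_add S1 S2).
Proof.
move=> H1 H2 a b t [a1 [a2 [h1 [h2 ->]]]] [b1 [b2 [k1 [k2 ->]]]] t01.
have -> : (1 - t) *: (a1 + a2) + t *: (b1 + b2) =
   ((1 - t) *: a1 + t *: b1) + ((1 - t) *: a2 + t *: b2).
  by rewrite !scalerDr addrACA.
exact: cl_add (H1 _ _ _ h1 k1 t01) (H2 _ _ _ h2 k2 t01).
Qed.

Lemma NC_dom (A : X -> set X) : maximally_monotone ip A -> NC (dom_op A).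
Proof. move=> HA a b t ha hb t01. exact: dom_nc. Qed.

Lemma NC_ran (A : X -> set X) : maximally_monotone ip A -> NC (ran_op A).
Proof. move=> HA. rewrite -dom_inv. apply: NC_dom. exact: inv_mm. Qed.

Lemma epsn_le1 k : epsn k <= 1.
Proof. by rewrite /epsn invf_le1 ?ltr0Sn // ler1n. Qed.

Lemma para (a b : X) :
  `|a - b| ^+ 2 + 4 * `|(1 - 2^-1) *: a + 2^-1 *: b| ^+ 2 = 2 * `|a| ^+ 2 + 2 * `|b| ^+ 2.
Proof. rewrite !sq_norm !ipE (ipC b a). lra. Qed.

Lemma minnorm (S : set X) : S !=set0 -> NC S ->
  exists p, closure S p /\ forall y, closure S y -> `|p| <= `|y|.
Proof.
move=> [s0 Ss0] HS.
set E := [set r : R | exists s, S s /\ r = `|s|].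
have Elb : lbound E 0 by move=> r [s [_ ->]].
have Ene : E !=set0 by exists `|s0|, s0.
set m := inf E.
have m0 : 0 <= m := inf_ge0 Ene Elb.
have mle : forall y, closure S y -> m <= `|y|.
  move=> y cy. apply: le_eps => e e0.
  have [s [Ss hs]] := (closure_normP S y).1 cy _ e0.
  have : m <= `|s| by apply: inf_le => //; exists s.
  have := ler_normB y (y - s). rewrite opprB addrC subrK. lra.
have hk : forall k, exists s, S s /\ `|s| < m + epsn k.
  move=> k. have [r [[s [Ss ->]] hr]] := inf_approx Ene Elb (epsn_gt0 k). by exists s.
have [s Hs] := choice hk.
set C := 4 * m + 2.
have C0 : 0 < C by rewrite /C; lra.
have est k j : `|s k - s j| ^+ 2 <= C * (epsn k + epsn j).
  have := para (s k) (s j).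
  have h2 : 0 <= (2^-1 : R) <= 1 by apply/andP; split; lra.
  have := mle _ (HS _ _ _ (Hs k).1 (Hs j).1 h2).
  have := (Hs k).2. have := (Hs j).2. have := normr_ge0 (s k). have := normr_ge0 (s j).
  have := epsn_le1 k. have := epsn_le1 j. have := epsn_gt0 k. have := epsn_gt0 j.
  rewrite /C. move: (epsn k) (epsn j) => ek ej. nra.
have cs : forall e : R, 0 < e -> exists N, forall k j, (N <= k)%N -> (N <= j)%N -> `|s k - s j| < e.
  move=> e e0. have h20 : 0 < 2 * C by rewrite mulr_gt0.
  have [N HN] := archi_inv (divr_gt0 (exprn_gt0 2 e0) h20).
  exists N => k j Nk Nj.
  have := HN k Nk. have := HN j Nj. have := est k j.
  move=> h1 h2 h3. rewrite -(ltr_pXn2r (n := 2)) ?nnegrE ?normr_ge0 //; last exact: ltW.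
  move: h2 h3; rewrite !ltr_pdivlMr // => h2 h3. move: (epsn k) (epsn j) h1 h2 h3 => ek ej. nra.
have [p Hp] := cauchy_seq_cvg cs.
exists p; split.
- apply: closure_ltP => e e0. have [N HN] := Hp e e0. exists (s N); split; first exact: (Hs N).1.
  exact: HN.
- move=> y cy. apply: le_trans (mle y cy). apply: le_eps => e e0.
  have e2 : 0 < e / 2 by rewrite divr_gt0.
  have [N1 H1] := Hp _ e2. have [N2 H2] := archi_inv e2.
  have := H1 (maxn N1 N2) (leq_maxl _ _). have := H2 (maxn N1 N2) (leq_maxr _ _).
  have := (Hs (maxn N1 N2)).2. have := ler_normD (s (maxn N1 N2)) (p - s (maxn N1 N2)).
  rewrite addrC subrK. move: (epsn _) => ee. lra.
Qed.

Lemma VI_of (S : set X) (p : X) : NC S -> closure S p -> (forall y, closure S y -> `|p| <= `|y|) ->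
  forall y, closure S y -> 0 <= ip (y - p) p.
Proof.
move=> HS cp Hp y cy. rewrite ipC.
have : 0 <= 2 * ip p (y - p); last lra.
apply: (small_t (be := `|y - p| ^+ 2)); first exact: sqr_ge0.
move=> t t0 t1.
have t01 : 0 <= t <= 1 by rewrite ltW.
have := Hp _ (NC_cl HS cp cy t01). rewrite comb_eq => h.
have := lerXn2r 2 (normr_ge0 _) (normr_ge0 _) . 
have : `|p| ^+ 2 <= `|p + t *: (y - p)| ^+ 2.
  by rewrite ler_pXn2r ?nnegrE ?normr_ge0.
rewrite norm_comb. lra.
Qed.

Lemma subBB (a b c d : X) : a - b - (c - d) = (a - c) - (b - d).
Proof. by rewrite (opprB c d) (opprB b d) addrACA [RHS]addrACA (addrC (- b)). Qed.
Lemma lin3 (x a b y c d : X) : (x - a + b) - (y - c + d) = (x - y) - (a - c) + (b - d).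
Proof. by rewrite opprD addrACA subBB. Qed.
Lemma subsub3 (x a b : X) : x - (x - a + b) = a - b.
Proof. by rewrite opprD opprB addrA (addrC x) subrK. Qed.
Lemma id4 (v a s s' : X) : v - (a + s') = (s + v - s') - (a + s).
Proof. rewrite !opprD !addrA (addrC s v) [RHS]addrAC (addrAC (v + s)) addrK. by rewrite addrAC. Qed.
Lemma id5 (f : X) (n : nat) (v : X) : f - n.+1%:R *: v = f - n%:R *: v - v.
Proof. by rewrite mulrSr scalerDl scale1r opprD addrA. Qed.
Lemma id7 (g a b : X) : b = g - a + b - g + a.
Proof. by rewrite (addrAC (g - a)) (addrAC g) subrr add0r addrAC addNr add0r. Qed.
Lemma id8 (g v : X) : g - (g - v) = v.
Proof. by rewrite opprB addrC subrK. Qed.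
Lemma id9 (f u v a w : X) : f - u - v - a - w = (f - u - a - w) - v.
Proof. by rewrite (addrAC (f - u)) (addrAC (f - u - a)). Qed.
Lemma id10 (y a v : X) : y - (a - v) - v = y - a.
Proof. by rewrite opprB addrA addrAC addrK. Qed.

Section DR.
Variables A B : X -> set X.
Hypotheses (HA : maximally_monotone ip A) (HB : maximally_monotone ip B).

Lemma RA_diff x y : reflected_resolvent A x - reflected_resolvent A y =
  2%:R *: (resolvent A x - resolvent A y) - (x - y).
Proof. by rewrite /reflected_resolvent subBB -scalerBr. Qed.

Lemma RA_nonexp x y : `|reflected_resolvent A x - reflected_resolvent A y| <= `|x - y|.
Proof.
apply: le_norm_sq. rewrite RA_diff. have := res_firm HA x y.
move: (resolvent A x - resolvent A y) (x - y) => u d.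
rewrite !sq_norm !ipE ?(ipC d u). lra.
Qed.

Lemma T_diff x y : DR_op A B x - DR_op A B y =
  (x - y) - (resolvent A x - resolvent A y) +
  (resolvent B (reflected_resolvent A x) - resolvent B (reflected_resolvent A y)).
Proof. by rewrite /DR_op lin3. Qed.

Lemma IT x : x - DR_op A B x = resolvent A x - resolvent B (reflected_resolvent A x).
Proof. by rewrite /DR_op subsub3. Qed.

Lemma T_firm x y : `|DR_op A B x - DR_op A B y| ^+ 2 +
  `|(x - DR_op A B x) - (y - DR_op A B y)| ^+ 2 <= `|x - y| ^+ 2.
Proof.
rewrite T_diff !IT (subBB (resolvent A x)).
have h1 := res_firm HA x y. have h2 := res_firm HB (reflected_resolvent A x) (reflected_resolvent A y).
rewrite RA_diff in h2.
move: (resolvent A x - resolvent A y)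
  (resolvent B (reflected_resolvent A x) - resolvent B (reflected_resolvent A y)) (x - y) h1 h2
  => u w d h1 h2.
rewrite !sq_norm !ipE in h1 h2 *. rewrite ?(ipC w u) ?(ipC d u) ?(ipC d w) in h1 h2 *. lra.
Qed.

Lemma T_nonexp x y : `|DR_op A B x - DR_op A B y| <= `|x - y|.
Proof.
apply: le_norm_sq. have := T_firm x y.
have := sqr_ge0 `|x - DR_op A B x - (y - DR_op A B y)|. lra.
Qed.

Lemma iter_nonexp n x y : `|iter n (DR_op A B) x - iter n (DR_op A B) y| <= `|x - y|.
Proof.
elim: n => [|n IH] //=. exact: le_trans (T_nonexp _ _) IH.
Qed.

Lemma fix_prop v g : (forall y, `|v| <= `|y - DR_op A B y|) ->
  DR_op A B g = g - v -> DR_op A B (g - v) = g - v - v.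
Proof.
move=> Hv Tg. have h := T_firm g (g - v). rewrite Tg id8 in h.
have hv := Hv (g - v).
move: (DR_op A B (g - v)) h hv => Ty h hv.
have [w Ew] : exists w, w = g - v - Ty by eexists.
rewrite -Ew in h hv.
have hv2 : `|v| ^+ 2 <= `|w| ^+ 2 by rewrite ler_pXn2r ?nnegrE ?normr_ge0.
have : `|v - w| ^+ 2 <= 0 by lra.
move=> h0. have : `|v - w| = 0.
  apply/eqP; rewrite -sqrf_eq0 eq_le h0 andTb. exact: sqr_ge0.
move/normr0_eq0/eqP; rewrite subr_eq0 => /eqP vw.
by rewrite {2}vw Ew id8.
Qed.

End DR.
End Aux.
Unset Implicit Arguments.

Theorem corollary5p7 (R : realType) (X : completeNormedModType R)
  (ip : X -> X -> R) (Hip : is_inner_product ip)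
  (A B : X -> set X)
  (HA : maximally_monotone ip A) (HB : maximally_monotone ip B)
  (Hran : closure (range (fun y => y - DR_op A B y))
          = closure (set_sub (dom_op A) (dom_op B)
                     `&` set_add (ran_op A) (ran_op B)))
  (Hran' : closure (set_sub (dom_op A) (dom_op B)
                     `&` set_add (ran_op A) (ran_op B))
           = closure (set_sub (dom_op A) (dom_op B))
             `&` closure (set_add (ran_op A) (ran_op B)))
  (HvR : nearest_proj (closure (set_add (ran_op A) (ran_op B))) (0 : X) = 0)
  (f : X)
  (Hf : f = nearest_proj (closure (range (fun y => y - DR_op A B y))) (0 : X) + DR_op A B f)
  (x : X) :
  let T := DR_op A B in
  let vD := nearest_proj (closure (set_sub (dom_op A) (dom_op B))) (0 : X) in
  [/\ forall n : nat,
        resolvent A (iter n T f) = resolvent A (f - n%:R *: vD) /\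
        resolvent A (f - n%:R *: vD) = resolvent A f,
      exists M : R, forall n : nat, `|resolvent A (iter n T x)| <= M &
      exists M : R, forall n : nat,
        `|resolvent B (reflected_resolvent A (iter n T x))| <= M].
Proof.
move=> T vD.
have NCD : NC (set_sub (dom_op A) (dom_op B)) := NC_sub (NC_dom Hip HA) (NC_dom Hip HB).
have NCR : NC (set_add (ran_op A) (ran_op B)) := NC_add (NC_ran Hip HA) (NC_ran Hip HB).
have [y0 [w0 Ay0]] := gra_ne HA.
have [z0 [s0 Bz0]] := gra_ne HB.
have Dne : set_sub (dom_op A) (dom_op B) !=set0.
  exists (y0 - z0), y0, z0; split; first by exists w0. split => //. by exists s0.
have Rne : set_add (ran_op A) (ran_op B) !=set0.
  exists (w0 + s0), w0, s0; split; first by exists y0. split => //. by exists z0.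
have hvD : closure (set_sub (dom_op A) (dom_op B)) vD /\
    (forall y, closure (set_sub (dom_op A) (dom_op B)) y -> `|0 - vD| <= `|0 - y|).
  have [p [cp mp]] := minnorm Hip Dne NCD.
  apply: (getPex (P := [set q | closure (set_sub (dom_op A) (dom_op B)) q /\
    (forall y, closure (set_sub (dom_op A) (dom_op B)) y -> `|0 - q| <= `|0 - y|)])).
  exists p; split => // y cy; rewrite !sub0r !normrN; exact: mp cy.
have cvD := hvD.1.
have mvD : forall y, closure (set_sub (dom_op A) (dom_op B)) y -> `|vD| <= `|y|.
  by move=> y cy; have := hvD.2 y cy; rewrite !sub0r !normrN.
have VI := VI_of Hip NCD cvD mvD.
clearbody vD.
have cR0 : closure (set_add (ran_op A) (ran_op B)) 0.
  have [p [cp mp]] := minnorm Hip Rne NCR.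
  have h : closure (set_add (ran_op A) (ran_op B))
      (nearest_proj (closure (set_add (ran_op A) (ran_op B))) (0 : X)) /\
      (forall y, closure (set_add (ran_op A) (ran_op B)) y ->
       `|0 - nearest_proj (closure (set_add (ran_op A) (ran_op B))) (0 : X)| <= `|0 - y|).
    apply: (getPex (P := [set q | closure (set_add (ran_op A) (ran_op B)) q /\
      (forall y, closure (set_add (ran_op A) (ran_op B)) y -> `|0 - q| <= `|0 - y|)])).
    exists p; split => // y cy; rewrite !sub0r !normrN; exact: mp cy.
  by have := h.1; rewrite HvR.
have bnd : forall z, dom_op B z -> ip z vD <= ip y0 vD - `|vD| ^+ 2.
  move=> z dz.
  have hz : set_sub (dom_op A) (dom_op B) (y0 - z).
    by exists y0, z; split; [exists w0|split].
  have := VI (y0 - z) (closure_sub hz).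
  rewrite (ipBl Hip) (ipBl Hip) (ipxx Hip). lra.
have bc : forall s, ran_op B s -> closure (ran_op B) (s + vD).
  move=> s [z Bzs]. apply: (bar_cone Hip HB Bzs) => y dy. exact: bnd.
have vDR : closure (set_add (ran_op A) (ran_op B)) vD.
  apply: closure_ltP => e e0.
  have e2 : 0 < e / 2 by rewrite divr_gt0.
  have [r [[a [s [ra [rs ->]]]] hr]] := (closure_normP _ _).1 cR0 _ e2.
  have [s' [rs' hs']] := (closure_normP _ _).1 (bc s rs) _ e2.
  exists (a + s'); split; first by exists a, s'.
  rewrite (id4 vD a s s'). apply: le_lt_trans (ler_normB _ _) _.
  rewrite sub0r normrN in hr. lra.
have vDS : closure (range (fun y => y - DR_op A B y)) vD.
  by rewrite Hran Hran'; split.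
have hv : closure (range (fun y => y - DR_op A B y))
      (nearest_proj (closure (range (fun y => y - DR_op A B y))) (0 : X)) /\
    (forall y, closure (range (fun y => y - DR_op A B y)) y ->
      `|0 - nearest_proj (closure (range (fun y => y - DR_op A B y))) (0 : X)| <= `|0 - y|).
  apply: (getPex (P := [set q | closure (range (fun y => y - DR_op A B y)) q /\
      (forall y, closure (range (fun y => y - DR_op A B y)) y -> `|0 - q| <= `|0 - y|)])).
  exists vD; split => // y cy; rewrite !sub0r !normrN. apply: mvD.
  by move: cy; rewrite Hran Hran' => -[].
move: hv Hf. set v := nearest_proj _ _. move=> hv Hf.
have cvd : closure (set_sub (dom_op A) (dom_op B)) v.
  by move: hv.1; rewrite Hran Hran' => -[].
have v_eq : v = vD.
  have h1 := mvD v cvd.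
  have h2 : `|v| <= `|vD| by have := hv.2 vD vDS; rewrite !sub0r !normrN.
  have h3 := VI v cvd.
  have n2 := norm_add2 Hip v (- vD).
  rewrite !(ipE Hip) !normrN in n2 h3. rewrite (ipxx Hip) in h3.
  have e1 : `|v| = `|vD| by apply/eqP; rewrite eq_le h1 h2.
  have h4 : `|v - vD| ^+ 2 <= 0 by rewrite e1 in n2; rewrite ?(ipC Hip vD v) in h3; lra.
  have : `|v - vD| = 0.
    apply/eqP; rewrite -sqrf_eq0 eq_le h4 andTb. exact: sqr_ge0.
  by move/normr0_eq0/eqP; rewrite subr_eq0 => /eqP.
have Hmin : forall y, `|v| <= `|y - DR_op A B y|.
  move=> y. have hr : range (fun y => y - DR_op A B y) (y - DR_op A B y) by exists y.
  have := hv.2 (y - DR_op A B y) (closure_sub hr).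
  by rewrite !sub0r !normrN.
have Tf : DR_op A B f = f - v by rewrite {2}Hf (addrC v) addrK.
have Tn : forall n : nat, DR_op A B (f - n%:R *: v) = f - n%:R *: v - v.
  elim => [|n IH]; first by rewrite scale0r subr0.
  rewrite id5. exact: (fix_prop Hip HA HB (v:=v) (g:=f - n%:R *: v) Hmin IH).
have iterf : forall n : nat, iter n T f = f - n%:R *: v.
  elim => [|n IH]; first by rewrite /= scale0r subr0.
  by rewrite iterS IH /T Tn -id5.
set a := resolvent A f.
have JBe : forall n : nat,
    resolvent B (reflected_resolvent A (f - n%:R *: v)) = resolvent A (f - n%:R *: v) - v.
  move=> n. have := Tn n. rewrite /DR_op => h.
  rewrite (id7 (f - n%:R *: v) (resolvent A (f - n%:R *: v))
     (resolvent B (reflected_resolvent A (f - n%:R *: v)))) h.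
  by rewrite (addrAC (f - n%:R *: v)) subrr add0r addrC.
have Bb : B (a - v) (reflected_resolvent A f - (a - v)).
  have := JBe 0%N. rewrite scale0r subr0 -/a => <-. exact: (@res_spec R X ip Hip B HB (reflected_resolvent A f)).
have hA : forall n : nat, A a (f - n%:R *: v - a).
  elim => [|n IH]; first by rewrite scale0r subr0; exact: (@res_spec R X ip Hip A HA f).
  apply: (maxi HA) => y w Ayw.
  rewrite id5 id9.
  have h1 := mono HA IH Ayw.
  have h2 := VI (y - (a - v)) (closure_sub (ex_intro _ y (ex_intro _ (a - v)
     (conj (ex_intro _ w Ayw) (conj (ex_intro _ _ Bb) erefl))))).
  rewrite -v_eq id10 in h2.
  rewrite (ipBr Hip). rewrite -opprB (ipNl Hip) in h2. lra.
have JAn : forall n : nat, resolvent A (f - n%:R *: v) = a.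
  by move=> n; apply: (resolventE Hip HA (hA n)).
split.
- move=> n. by rewrite iterf -v_eq JAn.
- exists (`|x - f| + `|a|) => n.
  have h1 := res_nonexp Hip HA (iter n T x) (iter n T f).
  have h2 : `|iter n T x - iter n T f| <= `|x - f| := iter_nonexp Hip HA HB n x f.
  rewrite iterf JAn in h1. rewrite iterf in h2.
  have := ler_normD (resolvent A (iter n T x) - a) a. rewrite subrK. lra.
- exists (`|x - f| + `|a - v|) => n.
  have h1 := res_nonexp Hip HB (reflected_resolvent A (iter n T x))
    (reflected_resolvent A (iter n T f)).
  have h2 := RA_nonexp Hip HA (iter n T x) (iter n T f).
  have h3 : `|iter n T x - iter n T f| <= `|x - f| := iter_nonexp Hip HA HB n x f.
  rewrite iterf JBe JAn in h1.
  rewrite iterf in h2. rewrite iterf in h3.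
  have := ler_normD (resolvent B (reflected_resolvent A (iter n T x)) - (a - v)) (a - v).
  rewrite subrK. lra.
Qed.
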